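(* Let $L$ be a complete finite-dimensional Lie algebra over any field. Then there exists a Lie algebra $H$ with $H^2\cong L$ if and only if $L$ is perfect, i.e. $L^2=L$.
   Context: A Lie algebra $L$ is complete if $Z(L)=0$ and every derivation of $L$ is inner, i.e. $\mathrm{Der}(L)=\mathrm{ad}(L)$. $H^2=[H,H]$ denotes the derived algebra. *)

(* Defs.v *)
From HB Require Import structures.
From mathcomp Require Import all_boot all_order all_algebra.
Set Implicit Arguments. Unset Strict Implicit. Unset Printing Implicit Defensive.
Import GRing.Theory.
Local Open Scope ring_scope.

Definition is_lie (F : fieldType) (V : lmodType F) (b : V -> V -> V) : Prop :=
  [/\ (forall (a : F) (x y z : V), b (a *: x + y) z = a *: b x z + b y z),
      (forall (a : F) (x y z : V), b z (a *: x + y) = a *: b z x + b z y),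
      (forall x : V, b x x = 0) &
      (forall x y z : V, b x (b y z) + b y (b z x) + b z (b x y) = 0)].

Definition in_derived (F : fieldType) (V : lmodType F) (b : V -> V -> V) (x : V) : Prop :=
  exists s : seq (V * V), x = \sum_(p <- s) b p.1 p.2.

Definition perfect (F : fieldType) (V : lmodType F) (b : V -> V -> V) : Prop :=
  forall x : V, in_derived b x.

Definition is_linear_map (F : fieldType) (U V : lmodType F) (f : U -> V) : Prop :=
  forall (a : F) (x y : U), f (a *: x + y) = a *: f x + f y.

Definition is_derivation (F : fieldType) (V : lmodType F) (b : V -> V -> V)
  (D : V -> V) : Prop :=
  is_linear_map D /\ forall x y : V, D (b x y) = b (D x) y + b x (D y).

Definition complete_lie (F : fieldType) (V : lmodType F) (b : V -> V -> V) : Prop :=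
  (forall z : V, (forall x : V, b z x = 0) -> z = 0) /\
  (forall D : V -> V, is_derivation b D -> exists a : V, forall x : V, D x = b a x).

(* H^2 is isomorphic (as Lie algebra) to L: there is an injective linear
   bracket-preserving map L -> H whose image is exactly H^2. *)
Definition derived_iso (F : fieldType) (H L : lmodType F)
  (bH : H -> H -> H) (bL : L -> L -> L) : Prop :=
  exists f : L -> H,
    [/\ is_linear_map f, injective f,
        (forall x y : L, f (bL x y) = bH (f x) (f y)) &
        (forall h : H, in_derived bH h <-> exists x : L, h = f x)].

(* Main.v *)
Require Import Defs.
From HB Require Import structures.
From mathcomp Require Import all_boot all_order all_algebra.
From Stdlib Require Import ClassicalEpsilon.
Import GRing.Theory.
Local Open Scope ring_scope.
Set Implicit Arguments. Unset Strict Implicit.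

Lemma lDl (F : fieldType) (V : lmodType F) (b : V -> V -> V) (hl : is_lie b) (x y z : V) :
  b (x + y) z = b x z + b y z.
Proof. by case: hl => h1 _ _ _; have := h1 1 x y z; rewrite !scale1r. Qed.
Lemma lDr (F : fieldType) (V : lmodType F) (b : V -> V -> V) (hl : is_lie b) (x y z : V) :
  b z (x + y) = b z x + b z y.
Proof. by case: hl => _ h1 _ _; have := h1 1 x y z; rewrite !scale1r. Qed.
Lemma lBl (F : fieldType) (V : lmodType F) (b : V -> V -> V) (hl : is_lie b) (x y z : V) :
  b (x - y) z = b x z - b y z.
Proof. case: hl => h1 _ _ _; have e := h1 (-1) y x z; rewrite !scaleN1r in e.
by rewrite [x - y]addrC e addrC. Qed.
Lemma lBr (F : fieldType) (V : lmodType F) (b : V -> V -> V) (hl : is_lie b) (x y z : V) :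
  b z (x - y) = b z x - b z y.
Proof. case: hl => _ h1 _ _; have e := h1 (-1) y x z; rewrite !scaleN1r in e.
by rewrite [x - y]addrC e addrC. Qed.
Lemma l0l (F : fieldType) (V : lmodType F) (b : V -> V -> V) (hl : is_lie b) (z : V) :
  b 0 z = 0.
Proof. by have := lBl hl z z z; rewrite !subrr. Qed.
Lemma l0r (F : fieldType) (V : lmodType F) (b : V -> V -> V) (hl : is_lie b) (z : V) :
  b z 0 = 0.
Proof. by have := lBr hl z z z; rewrite !subrr. Qed.
Lemma lanti (F : fieldType) (V : lmodType F) (b : V -> V -> V) (hl : is_lie b) (x y : V) :
  b x y = - b y x.
Proof.
have := hl; case=> _ _ h3 _.
have := h3 (x + y); rewrite (lDl hl) !(lDr hl) !h3 add0r addr0 => /eqP.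
by rewrite addr_eq0 => /eqP.
Qed.
Lemma lNr (F : fieldType) (V : lmodType F) (b : V -> V -> V) (hl : is_lie b) (x z : V) :
  b z (- x) = - b z x.
Proof. by have := lBr hl 0 x z; rewrite sub0r (l0r hl) sub0r. Qed.

Lemma f0 (F : fieldType) (U V : lmodType F) (f : U -> V) (hf : is_linear_map f) : f 0 = 0.
Proof. by have := hf (-1) 0 0; rewrite !scaleN1r oppr0 addr0 addNr. Qed.
Lemma fD (F : fieldType) (U V : lmodType F) (f : U -> V) (hf : is_linear_map f) x y :
  f (x + y) = f x + f y.
Proof. by have := hf 1 x y; rewrite !scale1r. Qed.
Lemma fB (F : fieldType) (U V : lmodType F) (f : U -> V) (hf : is_linear_map f) x y :
  f (x - y) = f x - f y.
Proof. have e := hf (-1) y x; rewrite !scaleN1r in e.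
by rewrite [x - y]addrC e addrC. Qed.
Theorem corollary2p2 (F : fieldType) (L : vectType F) (bL : L -> L -> L) :
  is_lie bL -> complete_lie bL ->
  ((exists (H : lmodType F) (bH : H -> H -> H), is_lie bH /\ derived_iso bH bL)
   <-> perfect bL).
Proof.
move=> hL [hZ hD]; split; last first.
  move=> hp; exists L, bL; split=> //; exists id; split=> //.
  move=> h; split; first by move=> _; exists h.
  by move=> _; apply: hp.
move=> [H [bH [hH [f [flin finj fbr fim]]]]].
have dec : forall h : H, exists a : L, exists2 c : H, h = f a + c & forall z, bH c (f z) = 0.
  move=> h.
  have ex : forall z : L, {x : L | bH h (f z) = f x}.
    move=> z; apply: constructive_indefinite_description.
    apply/fim; exists [:: (h, f z)]; by rewrite big_cons big_nil addr0.
  pose D z := sval (ex z).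
  have DE z : f (D z) = bH h (f z) by rewrite /D; case: (ex z).
  have [a Ha] : exists a, forall x, D x = bL a x.
    apply: hD; split.
      move=> c x y; apply: finj; rewrite flin !DE flin.
      by case: (hH) => _ h2 _ _; rewrite h2.
    move=> x y; apply: finj; rewrite (fD flin) !fbr !DE fbr.
    case: (hH) => _ _ _ hJ; have := hJ h (f x) (f y).
    rewrite (lanti hH (f y) h) (lanti hH (f y) (bH h (f x))) (lNr hH).
    move=> /eqP; rewrite -addrA addr_eq0 => /eqP ->.
    by rewrite opprD !opprK addrC.
  exists a, (h - f a); first by rewrite addrC subrK.
  by move=> z; rewrite (lBl hH) -DE Ha fbr subrr.
have cent : forall c1 c2 : H, (forall z, bH c1 (f z) = 0) -> (forall z, bH c2 (f z) = 0) ->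
    forall z, bH (bH c1 c2) (f z) = 0.
  move=> c1 c2 h1 h2 z; case: (hH) => _ _ _ hJ; have := hJ c1 c2 (f z).
  rewrite h2 (l0r hH) add0r (lanti hH (f z) c1) h1 oppr0 (l0r hH) add0r.
  by move=> e; rewrite (lanti hH) e oppr0.
have key : forall s : seq (H * H), exists t : seq (L * L), exists c : H,
    \sum_(p <- s) bH p.1 p.2 = f (\sum_(q <- t) bL q.1 q.2) + c /\ forall z, bH c (f z) = 0.
  elim=> [|[h1 h2] s [t [c [e hc]]]].
    exists [::], 0; rewrite !big_nil (f0 flin) addr0; split=> // z; exact: (l0l hH).
  have [a1 [c1 -> H1]] := dec h1; have [a2 [c2 -> H2]] := dec h2.
  exists ((a1, a2) :: t), (c + bH c1 c2); split; last first.
    by move=> z; rewrite (lDl hH) hc cent // add0r.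
  rewrite !big_cons /= e (fD flin) fbr (lDl hH) !(lDr hH) H1.
  rewrite (lanti hH (f a1) c2) H2 oppr0 add0r !addr0 addrACA; congr (_ + _); exact: addrC.
move=> x; have [s hs] : in_derived bH (f x) by apply/fim; exists x.
have [t [c [e hc]]] := key s.
have cE : c = f (x - \sum_(q <- t) bL q.1 q.2) by rewrite (fB flin) hs e addrC addKr.
have : x - \sum_(q <- t) bL q.1 q.2 = 0.
  apply: hZ => z; apply: finj; rewrite fbr -cE hc; apply/esym/(f0 flin).
by move/eqP; rewrite subr_eq0 => /eqP ->; exists t.
Qed.
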